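(* Consider the Probabilistic Serial mechanism with $n$ agents and $m \le n$ items. Agent 1 has a strict linear order $\succ_1$ over the items; let $\overline{O}$ be the set of its $k$ most preferred items under $\succ_1$ ($1 \le k \le m$). Fix arbitrary reported strict linear orders of agents $2,\dots,n$, and consider the truthful run in which agent 1 reports $\succ_1$. Let $T$ be the time at which the last item of $\overline{O}$ is exhausted in this run, and suppose $\tfrac12 \le T < \tfrac23$. Suppose there is an item $o^* \in \overline{O}$ of which agent 1 receives a positive amount such that, at the moment $o^*$ is exhausted, the agents eating $o^*$ are exactly agent 1 and one other agent (agent 2). Let $t_1$ be the time at which agent 1 starts eating $o^*$, let $t_2$ be the length of time agent 1 spends eating $o^*$ (so $o^*$ is exhausted at time $t_1+t_2$), and let $t_3 = T - t_1 - t_2$. Then $$t_1 + t_2 \ge \tfrac12,\quad t_3 < \tfrac16,\quad t_1 < \tfrac13,\quad t_2 > 2t_3.$$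
   Context: Probabilistic Serial: there are $n$ agents and $m$ divisible items of unit supply; each agent reports a strict linear order over all items. Starting at time $0$, every agent consumes at rate $1$ per unit time its most preferred item (according to its report) among those with positive remaining supply; when an item is exhausted, agents consuming it move to their most preferred item still available; this continues until all items are exhausted. *)

(* Defs.v *)
(* Probabilistic Serial (eating) mechanism as a discrete
   sequence of phases over an ordered field R. *)
From HB Require Import structures.
From mathcomp Require Import all_boot all_order all_algebra perm.
Set Implicit Arguments. Unset Strict Implicit. Unset Printing Implicit Defensive.
Import Order.TTheory GRing.Theory Num.Theory.
Local Open Scope ring_scope.

Section PS.
Variables (R : realFieldType) (n m : nat).
(* A preference profile: [pref i] is the ranking of agent i: [pref i o] is the
   position of item o in agent i's strict linear order (0 = most preferred);
   agent i prefers o to o' iff (pref i o < pref i o')%N. *)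
Variable pref : 'I_n -> {perm 'I_m}.

Definition state := {ffun 'I_m -> R}.

Definition avail (s : state) (o : 'I_m) : bool := 0 < s o.

Definition top (s : state) (i : 'I_n) : option 'I_m :=
  [pick o | avail s o &
     [forall o' : 'I_m, avail s o' ==> (pref i o <= pref i o')%N]].

Definition eaters (s : state) (o : 'I_m) : {set 'I_n} :=
  [set i | top s i == Some o].

Definition rate (s : state) (o : 'I_m) : R := (#|eaters s o|)%:R.

(* Length of the current phase: time until the next item is exhausted. *)
Definition dt (s : state) : R :=
  match [pick o | [&& avail s o, (0 < #|eaters s o|)%N &
           [forall o' : 'I_m, (avail s o' && (0 < #|eaters s o'|)%N) ==>
                 (s o / rate s o <= s o' / rate s o')]]] with
  | Some o => s o / rate s o
  | None => 0
  end.

Definition next (s : state) : state := [ffun o => s o - rate s o * dt s].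

Definition init : state := [ffun => 1].

(* Supply state at the start of phase j (all items exhausted after m phases). *)
Definition phase (j : nat) : state := iter j next init.

Definition exhaust_time (o : 'I_m) : R :=
  \sum_(j < m) (if avail (phase j) o then dt (phase j) else 0).

(* Amount of item o received by agent i = time agent i spends eating o. *)
Definition share (i : 'I_n) (o : 'I_m) : R :=
  \sum_(j < m) (if top (phase j) i == Some o then dt (phase j) else 0).

Definition start_time (i : 'I_n) (o : 'I_m) : R :=
  \sum_(j < m | [forall j' : 'I_m, (j' <= j)%N ==> (top (phase j') i != Some o)])
     dt (phase j).

Definition top_k (i : 'I_n) (k : nat) : {set 'I_m} :=
  [set o | (pref i o < k)%N].

Definition last_exhaust (O : {set 'I_m}) : R :=
  \big[Num.max/0]_(o in O) exhaust_time o.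

Definition eaters_at_exhaustion (o : 'I_m) (S : {set 'I_n}) : Prop :=
  exists j : nat, [/\ avail (phase j) o, ~~ avail (phase j.+1) o &
                      eaters (phase j) o = S].
End PS.

(* Main.v *)
Require Import Defs.
From HB Require Import structures.
From mathcomp Require Import all_boot all_order all_algebra perm.
From mathcomp Require Import lra.
Import Order.TTheory GRing.Theory Num.Theory.
Set Implicit Arguments. Unset Strict Implicit.
Local Open Scope ring_scope.

Section Proofs.
Variables (R : realFieldType) (n m : nat) (pref : 'I_n -> {perm 'I_m}).
Local Notation st := (state R m).
Local Notation ph := (phase R pref).
Local Notation nx := (Defs.next pref).

Lemma top_avail (s : st) i o : top pref s i = Some o -> avail s o.
Proof. by rewrite /top; case: pickP => // x /andP[Ha _] [<-]. Qed.

Lemma eaters0 (s : st) o : ~~ avail s o -> eaters pref s o = set0.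
Proof.
move=> Hn; apply/setP=> i; rewrite !inE; apply/negP=> /eqP /top_avail H.
by rewrite H in Hn.
Qed.

Lemma rate0 (s : st) o : ~~ avail s o -> rate pref s o = 0.
Proof. by move=> H; rewrite /rate eaters0 // cards0. Qed.

Lemma nextE (s : st) o : nx s o = s o - rate pref s o * dt pref s.
Proof. by rewrite /Defs.next ffunE. Qed.

Lemma next_unavail (s : st) o : ~~ avail s o -> ~~ avail (nx s) o.
Proof. by move=> H; rewrite /avail nextE rate0 // mul0r subr0. Qed.

Lemma phaseS j : ph j.+1 = nx (ph j).
Proof. by []. Qed.

Lemma unavail_le j j' o : (j <= j')%N -> ~~ avail (ph j) o -> ~~ avail (ph j') o.
Proof.
move=> /subnK <-; elim: (j' - j)%N => [|d IH] //= H.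
exact: next_unavail (IH H).
Qed.

Lemma avail_le j j' o : (j <= j')%N -> avail (ph j') o -> avail (ph j) o.
Proof.
move=> Hle Ha; apply/negPn/negP => Hn; by move: (unavail_le Hle Hn); rewrite Ha.
Qed.

Lemma top_next (s : st) i o : top pref s i = Some o -> avail (nx s) o ->
  top pref (nx s) i = Some o.
Proof.
move=> Ht Han.
have Hs : forall o', avail (nx s) o' -> avail s o'.
  move=> o' H; apply/negPn/negP=> Hn; by move: (next_unavail Hn); rewrite H.
move: Ht; rewrite /top; case: pickP => // x /andP[Hax /forallP Hx] [Exo]; subst x.
case: pickP => [y /andP[Hay /forallP Hy]|].
- have h1 := implyP (Hy o) Han. have h2 := implyP (Hx y) (Hs y Hay).
  have : pref i y = pref i o by apply: ord_inj; apply/eqP; rewrite eqn_leq h1 h2.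
  by move/perm_inj ->.
- move=> /(_ o); rewrite Han /=; move/negbT/forallPn => [o'].
  rewrite negb_imply => /andP[Ha' Hle].
  by move: (implyP (Hx o') (Hs o' Ha')); rewrite (negbTE Hle).
Qed.

Lemma top_persist j j' i o : (j <= j')%N -> top pref (ph j) i = Some o ->
  avail (ph j') o -> top pref (ph j') i = Some o.
Proof.
move=> /subnK <-; elim: (j' - j)%N => [|d IH] //= Ht Ha.
have Ha' := avail_le (leqnSn _) Ha.
rewrite /= in Ha *.
exact: top_next (IH Ht Ha') Ha.
Qed.

Lemma top_exists (s : st) i o : avail s o -> exists o1, top pref s i = Some o1.
Proof.
rewrite /top; case: pickP => [x _|H] Ha; first by exists x.
case: (@arg_minnP _ o (fun o => avail s o) (fun o => nat_of_ord (pref i o)) Ha)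
  => x Hx Hmin.
move: (H x); rewrite Hx /=; move/negbT/forallPn => [o'].
rewrite negb_imply => /andP[H1 H2].
by rewrite Hmin in H2.
Qed.

Lemma dt_ge0 (s : st) : 0 <= dt pref s.
Proof.
rewrite /dt; case: pickP => // o /and3P[Ha He _].
apply: divr_ge0; [exact: ltW | exact: ler0n].
Qed.

Lemma dt_exhaust (s : st) (i0 : 'I_n) o0 : avail s o0 ->
  exists o, avail s o && ~~ avail (nx s) o.
Proof.
move=> Ha. have [o1 Ht] := top_exists i0 Ha.
have Hp : avail s o1 && (0 < #|eaters pref s o1|)%N.
  rewrite (top_avail Ht) /=; apply/card_gt0P; exists i0; by rewrite inE Ht.
suff [o [Hao Hz]] : exists o, avail s o /\ rate pref s o * dt pref s = s o.
  by exists o; rewrite Hao /avail nextE Hz subrr ltxx.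
rewrite /dt; case: pickP => [o /and3P[Hao Heo _]|H].
  exists o; split => //; rewrite mulrC divfK //.
  by rewrite /rate pnatr_eq0 -lt0n.
case: (@arg_minP _ _ _ o1 (fun o => avail s o && (0 < #|eaters pref s o|)%N)
  (fun o => s o / rate pref s o) Hp) => x Hx Hmin.
move: (H x); case/andP: (Hx) => -> -> /=; move/negbT/forallPn => [o'].
rewrite negb_imply => /andP[H1 H2].
by rewrite Hmin in H2.
Qed.

Definition navail j := #|[set o | avail (ph j) o]|.

Lemma navail_bound (i0 : 'I_n) j : navail j = 0%N \/ (navail j + j <= m)%N.
Proof.
elim: j => [|j IH].
  by right; rewrite addn0 /navail; apply: (leq_trans (max_card _)); rewrite card_ord.
have Hsub : [set o | avail (ph j.+1) o] \subset [set o | avail (ph j) o].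
  by apply/subsetP=> o; rewrite !inE; exact: avail_le (leqnSn j).
case: (posnP (navail j)) => [H0|Hpos].
  by left; apply/eqP; rewrite -leqn0 -H0; exact: subset_leq_card.
case: IH => [H0|IH]; first by rewrite H0 in Hpos.
right.
have [o0 Ha] : exists o0, avail (ph j) o0.
  by move: Hpos; rewrite /navail card_gt0 => /set0Pn [o0]; rewrite inE; exists o0.
have [o /andP[H1 H2]] := dt_exhaust i0 Ha.
have Hpr : [set o | avail (ph j.+1) o] \proper [set o | avail (ph j) o].
  by apply/properP; split => //; exists o; rewrite !inE.
have := proper_card Hpr; rewrite -/(navail j) -/(navail j.+1) => Hlt.
by rewrite addnS -addSn (leq_trans _ IH) // leq_add2r.
Qed.

Lemma phase_sum N o :
  ph N o = 1 - \sum_(j < N) rate pref (ph j) o * dt pref (ph j).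
Proof.
elim: N => [|N IH]; first by rewrite big_ord0 subr0 /phase /= /init ffunE.
by rewrite big_ord_recr /= nextE IH opprD addrA.
Qed.

End Proofs.

Lemma le_bigmax_mem (R : realFieldType) (I : finType) (P : pred I) (f : I -> R) x :
  P x -> f x <= \big[Num.max/0]_(i | P i) f i.
Proof.
move=> Px; have : x \in index_enum I by rewrite mem_index_enum.
elim: (index_enum I) => // a r IH; rewrite inE big_cons => /orP[/eqP<-|/IH H].
  by rewrite Px le_max lexx.
by case: (P a) => //; rewrite le_max H orbT.
Qed.

Theorem lemma3 (R : realFieldType) (n m : nat) (pref : 'I_n -> {perm 'I_m})
  (a1 a2 : 'I_n) (k : nat) (ostar : 'I_m) :
  (m <= n)%N -> (1 <= k <= m)%N ->
  let Obar := top_k pref a1 k in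
  let T := last_exhaust R pref Obar in
  1 / 2 <= T -> T < 2 / 3 ->
  ostar \in Obar ->
  0 < share R pref a1 ostar ->
  a2 != a1 ->
  eaters_at_exhaustion R pref ostar [set a1; a2] ->
  let t1 := start_time R pref a1 ostar in
  let t2 := share R pref a1 ostar in
  let t3 := T - t1 - t2 in
  [/\ 1 / 2 <= t1 + t2, t3 < 1 / 6, t1 < 1 / 3 & 2 * t3 < t2].
Proof.
move=> Hmn _ Obar T HT1 HT2 Hin Hsh Ha21 [J [HaJ HnJ HeJ]] t1 t2 t3.
set E := exhaust_time R pref ostar.
have [j0 Hj0] : exists j0 : 'I_m, top pref (phase R pref j0) a1 = Some ostar.
  case: (pickP (fun j0 : 'I_m => top pref (phase R pref j0) a1 == Some ostar))
    => [j0 /eqP Hj0|Hno]; first by exists j0.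
  by move: Hsh; rewrite /share big1 ?ltxx // => j _; rewrite Hno.
have C1 : E = t1 + t2.
  rewrite /E /exhaust_time /t1 /start_time /t2 /share [X in _ = X + _]big_mkcond -big_split /=.
  apply: eq_bigr => j _.
  case: (boolP (top pref (phase R pref j) a1 == Some ostar)) => HA.
    have V := top_avail (eqP HA).
    have nB : ~~ [forall j' : 'I_m, (j' <= j)%N ==>
                 (top pref (phase R pref j') a1 != Some ostar)].
      by apply/forallPn; exists j; rewrite leqnn HA.
    by rewrite V (negbTE nB) add0r.
  set B := [forall j' : 'I_m, _].
  case: (boolP B) => HB.
    have Hle : (j <= j0)%N.
      rewrite leqNgt; apply/negP => Hlt.
      by move: (implyP (forallP HB j0) (ltnW Hlt)); rewrite Hj0 eqxx.
    by rewrite (avail_le Hle (top_avail Hj0)) addr0.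
  case: (boolP (avail _ _)) => V; last by rewrite addr0.
  exfalso; move/forallPn: HB => [j']; rewrite negb_imply negbK => /andP[Hle /eqP Ht].
  by have := top_persist Hle Ht V; move/eqP; rewrite (negbTE HA).
have C2 : E <= T by apply: le_bigmax_mem.
have Jm : (J < m)%N.
  case: (@navail_bound R n m pref a1 J) => H.
    by move: H; rewrite /navail => /eqP; rewrite cards_eq0 => /eqP/setP/(_ ostar);
      rewrite !inE HaJ.
  have : (0 < @navail R n m pref J)%N by rewrite /navail card_gt0; apply/set0Pn; exists ostar; rewrite inE.
  move=> Hp; apply: leq_trans H; by rewrite addnC -addn1 leq_add2l.
have Hm0 : phase R pref m ostar <= 0.
  by rewrite leNgt; apply: (unavail_le Jm HnJ).
have S1 : 1 <= \sum_(j < m) rate pref (phase R pref j) ostar * dt pref (phase R pref j).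
  by move: Hm0; rewrite phase_sum subr_le0.
have Hsub : forall j, avail (phase R pref j) ostar ->
    eaters pref (phase R pref j) ostar \subset [set a1; a2].
  move=> j Hv; have HjJ : (j <= J)%N.
    rewrite leqNgt; apply/negP => Hlt.
    by move: (unavail_le Hlt HnJ); rewrite Hv.
  rewrite -HeJ; apply/subsetP => i; rewrite !inE => /eqP Ht.
  by rewrite (top_persist HjJ Ht HaJ).
have Ha12 : a1 != a2 by rewrite eq_sym.
have Hr2 : forall j, avail (phase R pref j) ostar -> rate pref (phase R pref j) ostar <= 2.
  move=> j Hv; rewrite /rate ler_nat.
  by rewrite (leq_trans (subset_leq_card (Hsub j Hv))) // cards2 Ha12.
have Hr1 : forall j, avail (phase R pref j) ostar ->
    top pref (phase R pref j) a1 != Some ostar -> rate pref (phase R pref j) ostar <= 1.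
  move=> j Hv HA; rewrite /rate lern1 -(cards1 a2).
  apply: subset_leq_card; apply/subsetP => i Hi.
  move/subsetP: (Hsub j Hv) => /(_ i Hi); rewrite !inE => /orP[/eqP Ei|//].
  by move: Hi; rewrite Ei inE (negbTE HA).
have C3 : 1 <= E * 2.
  apply: (le_trans S1); rewrite /E /exhaust_time big_distrl /=.
  apply: ler_sum => j _; have hd := dt_ge0 pref (phase R pref j).
  case: (boolP (avail _ _)) => V; last by rewrite rate0 // !mul0r.
  by rewrite (mulrC _ 2); apply: ler_wpM2r => //; apply: Hr2.
have C4 : 1 <= E + t2.
  apply: (le_trans S1); rewrite /E /exhaust_time /t2 /share -big_split /=.
  apply: ler_sum => j _; have hd := dt_ge0 pref (phase R pref j).
  case: (boolP (avail (phase R pref j) ostar)) => V /=.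
    case: (boolP (top pref (phase R pref j) a1 == Some ostar)) => HA /=.
      by have h := Hr2 j V; nra.
    by have h := Hr1 j V HA; nra.
  rewrite rate0 // mul0r.
  case: (boolP (top pref (phase R pref j) a1 == Some ostar)) => HA /=; last lra.
  by rewrite (top_avail (eqP HA)) in V.
rewrite /t3 -/E; rewrite -C1 in C3 C4 *.
split; lra.
Qed.
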